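(* In the setting below, for all $i,j,k\in\{1,\dots,q\}$: (i) $[y_i,z_j]=[\tilde y_i,\tilde z_j]=0$ and $[\tilde y_i,z_j]=-[y_i,\tilde z_j]=\delta_{ij}A_\lambda$; (ii) $[y_i,y_j]=-[z_i,z_j]$, $[\tilde y_i,\tilde y_j]=-[\tilde z_i,\tilde z_j]$, $[y_i,\tilde y_j]=-[z_i,\tilde z_j]$; (iii) $[[y_i,y_j],y_k]=[[\tilde y_i,\tilde y_j],\tilde y_k]=0$, $[[y_i,y_j],\tilde y_k]=\langle\lambda,\lambda\rangle(\delta_{jk}y_i+\delta_{ik}y_j)$, $[[\tilde y_i,\tilde y_j],y_k]=-\langle\lambda,\lambda\rangle(\delta_{jk}\tilde y_i+\delta_{ik}\tilde y_j)$, $[[y_i,\tilde y_j],y_k]=-\langle\lambda,\lambda\rangle\delta_{jk}y_i$, $[[y_i,\tilde y_j],\tilde y_k]=\langle\lambda,\lambda\rangle\delta_{ik}\tilde y_j$; (iv) $[[y_i,y_j],z_k]=[[\tilde y_i,\tilde y_j],\tilde z_k]=0$, $[[y_i,y_j],\tilde z_k]=\langle\lambda,\lambda\rangle(\delta_{jk}z_i+\delta_{ik}z_j)$, $[[\tilde y_i,\tilde y_j],z_k]=-\langle\lambda,\lambda\rangle(\delta_{jk}\tilde z_i+\delta_{ik}\tilde z_j)$, $[[y_i,\tilde y_j],z_k]=-\langle\lambda,\lambda\rangle\delta_{jk}z_i$, $[[y_i,\tilde y_j],\tilde z_k]=\langle\lambda,\lambda\rangle\delta_{ik}\tilde z_j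$.
   Context: Setting: $(\mathfrak g,\mathfrak k,\theta)$ a reductive symmetric superpair of even type ($\mathfrak g$ finite-dimensional complex Lie superalgebra, $\theta$ even involution with $(+1)$-eigenspace $\mathfrak k$ and $(-1)$-eigenspace $\mathfrak p$, $\mathfrak g$ semisimple as $\mathfrak g_0$-module, $\mathfrak z(\mathfrak g)\subset\mathfrak g_0$, $b$ a fixed non-degenerate even supersymmetric $\mathfrak g$- and $\theta$-invariant bilinear form), with even Cartan subspace $\mathfrak a$ ($\mathfrak a\subset\mathfrak p_0$, $\mathfrak a=\mathfrak z_{\mathfrak p}(\mathfrak a)$, $\operatorname{ad}\mathfrak a|_{\mathfrak g_0}$ semisimple). $\mathfrak g^\lambda_j$ denotes the $\lambda$-weight space of $\mathfrak a$ in $\mathfrak g_j$, $\Sigma_j$ the nonzero weights in $\mathfrak g_j$, $m_{\lambda,1}=\dim\mathfrak g_1^\lambda$. $b|_{\mathfrak a}$ is non-degenerate; $A_\lambda\in\mathfrak a$ is defined by $b(A_\lambda,h)=\lambda(h)$ for $h\in\mathfrak a$, and $\langle\lambda,\lambda\rangle=b(A_\lambda,A_\lambda)$. Let $\lambda\in\bar\Sigma_1=\{\lambda\in\Sigma_1:2\lambda\notin\Sigma_0\}$. Known facts: $m_{\lambda,1}=2q$ is even and $b^\theta(x,y)=b(x,\theta y)$ is a symplectic form on $\mathfrak g_1^\lambda$. Let $x_1,\dots,x_q,\tilde x_1,\dots,\tilde x_q$ be a basis of $\mathfrak g_1^\lambda$ with $b^\theta(x_i,x_j)=b^\theta(\tilde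 x_i,\tilde x_j)=0$, $b^\theta(x_i,\tilde x_j)=2\delta_{ij}$, and write $x_j=y_j+z_j$, $\tilde x_j=\tilde y_j+\tilde z_j$ with $y_j,\tilde y_j\in\mathfrak k$, $z_j,\tilde z_j\in\mathfrak p$. (Then $[h,y_i]=\lambda(h)z_i$, $[h,z_i]=\lambda(h)y_i$ etc. for $h\in\mathfrak a$, and $b(y_i,\tilde y_j)=b(\tilde z_j,z_i)=\delta_{ij}$.) *)

(* Defs.v *)
From HB Require Import structures.
From mathcomp Require Import all_boot all_order all_algebra.
Set Implicit Arguments. Unset Strict Implicit. Unset Printing Implicit Defensive.
Import Order.TTheory GRing.Theory.
Local Open Scope ring_scope.

Section SuperLie.
Variables (K : fieldType) (L : vectType K).
Implicit Types (x y z : L).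

Definition bilinear_map (f : L -> L -> L) :=
  (forall (a : K) x y z, f (a *: x + y) z = a *: f x z + f y z) /\
  (forall (a : K) x y z, f x (a *: y + z) = a *: f x y + f x z).

Definition bilinear_form (f : L -> L -> K) :=
  (forall (a : K) x y z, f (a *: x + y) z = a * f x z + f y z) /\
  (forall (a : K) x y z, f x (a *: y + z) = a * f x y + f x z).

Definition lin_endo (f : L -> L) :=
  forall (a : K) x y, f (a *: x + y) = a *: f x + f y.

(* super sign (-1)^{|x||y|}; parity false = even, true = odd *)
Definition ssign (i j : bool) : K := (-1) ^+ (i && j).

(* Z/2-grading g = g_0 (+) g_1, with gr false = g_0, gr true = g_1 *)
Definition is_grading (gr : bool -> {vspace L}) :=
  (gr false + gr true)%VS = fullv /\ (gr false :&: gr true)%VS = 0%VS.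

Definition is_lie_superalgebra (gr : bool -> {vspace L}) (br : L -> L -> L) :=
  [/\ is_grading gr, bilinear_map br,
      forall i j x y, x \in gr i -> y \in gr j -> br x y \in gr (i (+) j),
      forall i j x y, x \in gr i -> y \in gr j -> br x y = - (ssign i j *: br y x) &
      forall i j x y z, x \in gr i -> y \in gr j ->
         br x (br y z) = br (br x y) z + ssign i j *: br y (br x z)].

Definition even_involution (gr : bool -> {vspace L}) (br : L -> L -> L) (th : L -> L) :=
  [/\ lin_endo th, forall x, th (th x) = x,
      forall i x, x \in gr i -> th x \in gr i &
      forall x y, th (br x y) = br (th x) (th y)].

Definition g0_stable (gr : bool -> {vspace L}) (br : L -> L -> L) (U : {vspace L}) :=
  forall x u, x \in gr false -> u \in U -> br x u \in U.

Definition semisimple_g0_module (gr : bool -> {vspace L}) (br : L -> L -> L) :=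
  forall U : {vspace L}, g0_stable gr br U ->
    exists W : {vspace L}, [/\ g0_stable gr br W, (U + W)%VS = fullv & (U :&: W)%VS = 0%VS].

Definition center_in_even (gr : bool -> {vspace L}) (br : L -> L -> L) :=
  forall x, (forall y, br x y = 0) -> x \in gr false.

Definition admissible_form (gr : bool -> {vspace L}) (br : L -> L -> L) (th : L -> L)
    (b : L -> L -> K) :=
  bilinear_form b /\
  [/\ forall x, (forall y, b x y = 0) -> x = 0,
      forall x y, x \in gr false -> y \in gr true -> b x y = 0,
      forall i j x y, x \in gr i -> y \in gr j -> b x y = ssign i j * b y x,
      forall x y z, b (br x y) z = b x (br y z) &
      forall x y, b (th x) (th y) = b x y].

(* (g, k, theta) reductive symmetric superpair of even type with form b;
   k = {x | th x = x}, p = {x | th x = - x} *)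
Definition reductive_symmetric_superpair (gr : bool -> {vspace L}) (br : L -> L -> L)
    (th : L -> L) (b : L -> L -> K) :=
  [/\ is_lie_superalgebra gr br, even_involution gr br th,
      semisimple_g0_module gr br, center_in_even gr br &
      admissible_form gr br th b].

(* even Cartan subspace a: a <= p_0, a = z_p(a), ad a |_{g_0} semisimple *)
Definition even_cartan_subspace (gr : bool -> {vspace L}) (br : L -> L -> L)
    (th : L -> L) (a : {vspace L}) :=
  [/\ (a <= gr false)%VS,
      forall h, h \in a -> th h = - h,
      forall x, x \in a <-> (th x = - x /\ forall h, h \in a -> br h x = 0) &
      forall h, h \in a -> exists s : seq L,
        [/\ all (fun v => v \in gr false) s,
            forall v, v \in s -> exists c : K, br h v = c *: v &
            (gr false <= <<s>>)%VS]].

Definition weight_vec (gr : bool -> {vspace L}) (br : L -> L -> L) (a : {vspace L})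
    (j : bool) (lam : L -> K) x :=
  x \in gr j /\ forall h, h \in a -> br h x = lam h *: x.

Definition is_root (gr : bool -> {vspace L}) (br : L -> L -> L) (a : {vspace L})
    (j : bool) (lam : L -> K) :=
  (exists h, h \in a /\ lam h != 0) /\
  (exists x, x != 0 /\ weight_vec gr br a j lam x).

Definition kpart (th : L -> L) x : L := 2^-1 *: (x + th x).
Definition ppart (th : L -> L) x : L := 2^-1 *: (x - th x).

End SuperLie.

(* Main.v *)
From HB Require Import structures.
From mathcomp Require Import all_boot all_order all_algebra all_field.
Require Import Defs.
Set Implicit Arguments. Unset Strict Implicit. Unset Printing Implicit Defensive.
Import Order.TTheory GRing.Theory.
Local Open Scope ring_scope.

Section Main.
Variables (K : fieldType) (L : vectType K).
Variables (gr : bool -> {vspace L}) (br : L -> L -> L) (th : L -> L) (b : L -> L -> K).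
Hypothesis char0 : [pchar K] =i pred0.
Hypothesis Hsp : reductive_symmetric_superpair gr br th b.

Ltac unpack := have := Hsp; rewrite /reductive_symmetric_superpair /is_lie_superalgebra /even_involution /admissible_form /bilinear_map /bilinear_form /lin_endo;
  case => [[Hg [Hl Hr] Hc Hs Hj] [Tl Tt Tg Th] Hss Hz [[Bl Br] [Bn Be Bs Bi Bt]]].

Lemma two_neq0 : (2:K) != 0.
Proof. by move/pcharf0P: char0 => ->. Qed.

Lemma brDl x y z : br (x + y) z = br x z + br y z.
Proof. by unpack; rewrite -[x in LHS]scale1r Hl scale1r. Qed.
Lemma br0l z : br 0 z = 0.
Proof. by apply/(addrI (br 0 z)); rewrite -brDl !addr0. Qed.
Lemma brZl c x z : br (c *: x) z = c *: br x z.
Proof. by unpack; rewrite -[c *: x]addr0 Hl br0l addr0. Qed.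
Lemma brNl x z : br (- x) z = - br x z.
Proof. by rewrite -scaleN1r brZl scaleN1r. Qed.
Lemma brBl x y z : br (x - y) z = br x z - br y z.
Proof. by rewrite brDl brNl. Qed.
Lemma brDr x y z : br z (x + y) = br z x + br z y.
Proof. by unpack; rewrite -[x in LHS]scale1r Hr scale1r. Qed.
Lemma br0r z : br z 0 = 0.
Proof. by apply/(addrI (br z 0)); rewrite -brDr !addr0. Qed.
Lemma brZr c x z : br z (c *: x) = c *: br z x.
Proof. by unpack; rewrite -[c *: x]addr0 Hr br0r addr0. Qed.
Lemma brNr x z : br z (- x) = - br z x.
Proof. by rewrite -scaleN1r brZr scaleN1r. Qed.
Lemma brBr x y z : br z (x - y) = br z x - br z y.
Proof. by rewrite brDr brNr. Qed.
Lemma brsuml I (r : seq I) (P : pred I) (F : I -> L) z :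
  br (\sum_(i <- r | P i) F i) z = \sum_(i <- r | P i) br (F i) z.
Proof. exact: (big_morph (fun x => br x z) (fun x y => brDl x y z) (br0l z)). Qed.

Lemma thD x y : th (x + y) = th x + th y.
Proof. by unpack; rewrite -[x in LHS]scale1r Tl scale1r. Qed.
Lemma th0 : th 0 = 0.
Proof. by apply/(addrI (th 0)); rewrite -thD !addr0. Qed.
Lemma thZ c x : th (c *: x) = c *: th x.
Proof. by unpack; rewrite -[c *: x]addr0 Tl th0 addr0. Qed.
Lemma thN x : th (- x) = - th x.
Proof. by rewrite -scaleN1r thZ scaleN1r. Qed.
Lemma thB x y : th (x - y) = th x - th y.
Proof. by rewrite thD thN. Qed.
Lemma thK x : th (th x) = x.
Proof. by unpack; apply: Tt. Qed.
Lemma thbr x y : th (br x y) = br (th x) (th y).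
Proof. by unpack; apply: Th. Qed.
Lemma thgr i x : x \in gr i -> th x \in gr i.
Proof. by unpack; apply: Tg. Qed.

Lemma bDl x y z : b (x + y) z = b x z + b y z.
Proof. by unpack; rewrite -[x in LHS]scale1r Bl mul1r. Qed.
Lemma b0l z : b 0 z = 0.
Proof. by apply/(addrI (b 0 z)); rewrite -bDl !addr0. Qed.
Lemma bZl c x z : b (c *: x) z = c * b x z.
Proof. by unpack; rewrite -[c *: x]addr0 Bl b0l addr0. Qed.
Lemma bNl x z : b (- x) z = - b x z.
Proof. by rewrite -scaleN1r bZl mulN1r. Qed.
Lemma bBl x y z : b (x - y) z = b x z - b y z.
Proof. by rewrite bDl bNl. Qed.
Lemma bDr x y z : b z (x + y) = b z x + b z y.
Proof. by unpack; rewrite -[x in LHS]scale1r Br mul1r. Qed.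
Lemma b0r z : b z 0 = 0.
Proof. by apply/(addrI (b z 0)); rewrite -bDr !addr0. Qed.
Lemma bZr c x z : b z (c *: x) = c * b z x.
Proof. by unpack; rewrite -[c *: x]addr0 Br b0r addr0. Qed.
Lemma bNr x z : b z (- x) = - b z x.
Proof. by rewrite -scaleN1r bZr mulN1r. Qed.
Lemma bBr x y z : b z (x - y) = b z x - b z y.
Proof. by rewrite bDr bNr. Qed.
Lemma bsuml I (r : seq I) (P : pred I) (F : I -> L) z :
  b (\sum_(i <- r | P i) F i) z = \sum_(i <- r | P i) b (F i) z.
Proof. exact: (big_morph (fun x => b x z) (fun x y => bDl x y z) (b0l z)). Qed.

Lemma binv x y z : b (br x y) z = b x (br y z).
Proof. by unpack; apply: Bi. Qed.
Lemma bth x y : b (th x) (th y) = b x y.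
Proof. by unpack; apply: Bt. Qed.
Lemma bnd x : (forall y, b x y = 0) -> x = 0.
Proof. by unpack; apply: Bn. Qed.
Lemma b_eo x y : x \in gr false -> y \in gr true -> b x y = 0.
Proof. by unpack; apply: Be. Qed.
Lemma b_oe x y : x \in gr true -> y \in gr false -> b x y = 0.
Proof.
unpack => Hx Hy; rewrite (Bs true false x y) // /ssign /= expr0 mul1r.
exact: Be.
Qed.
Lemma b_odd x y : x \in gr true -> y \in gr true -> b x y = - b y x.
Proof. by unpack => Hx Hy; rewrite (Bs true true x y) // /ssign /= expr1 mulN1r. Qed.
Lemma b_even x y : x \in gr false -> y \in gr false -> b x y = b y x.
Proof. by unpack => Hx Hy; rewrite (Bs false false x y) // /ssign /= expr0 mul1r. Qed.

Lemma grbr i j x y : x \in gr i -> y \in gr j -> br x y \in gr (i (+) j).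
Proof. by unpack; apply: Hc. Qed.
Lemma skew_even h x j : h \in gr false -> x \in gr j -> br x h = - br h x.
Proof.
unpack => Hh Hx; rewrite (Hs false j h x) // /ssign /= expr0 scale1r opprK //.
Qed.
Lemma skew_odd v w : v \in gr true -> w \in gr true -> br v w = br w v.
Proof. by unpack => Hv Hw; rewrite (Hs true true v w) // /ssign /= expr1 scaleN1r opprK. Qed.
Lemma jac_even h y j z : h \in gr false -> y \in gr j ->
  br h (br y z) = br (br h y) z + br y (br h z).
Proof. by unpack => Hh Hy; rewrite (Hj false j) // /ssign /= expr0 scale1r. Qed.
Lemma jac_odd v w z : v \in gr true -> w \in gr true ->
  br v (br w z) = br (br v w) z - br w (br v z).
Proof. by unpack => Hv Hw; rewrite (Hj true true) // /ssign /= expr1 scaleN1r. Qed.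

Lemma grD x : exists2 x0, x0 \in gr false & exists2 x1, x1 \in gr true & x = x0 + x1.
Proof.
unpack; case: Hg => Hfull _.
have : x \in fullv by rewrite memvf.
rewrite -Hfull => /memv_addP [x0 H0 [x1 H1 ->]].
by exists x0 => //; exists x1.
Qed.

Notation kp := (kpart th).
Notation pp := (ppart th).
Lemma kpp x : kp x + pp x = x.
Proof.
rewrite /kpart /ppart -scalerDr addrACA subrr addr0 -mulr2n -scaler_nat.
by rewrite scalerA mulVf ?two_neq0 // scale1r.
Qed.
Lemma th_kp x : th (kp x) = kp x.
Proof. by rewrite /kpart thZ thD thK addrC. Qed.
Lemma th_pp x : th (pp x) = - pp x.
Proof. by rewrite /ppart thZ thB thK -scalerN opprB. Qed.
Lemma kpgr i x : x \in gr i -> kp x \in gr i.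
Proof. by move=> Hx; rewrite /kpart memvZ // memvD // thgr. Qed.
Lemma ppgr i x : x \in gr i -> pp x \in gr i.
Proof. by move=> Hx; rewrite /ppart memvZ // memvB // thgr. Qed.
Lemma kpL c x y : kp (c *: x + y) = c *: kp x + kp y.
Proof.
rewrite /kpart thD thZ scalerA mulrC -scalerA -scalerDr; congr (_ *: _).
by rewrite scalerDr addrACA.
Qed.
Lemma ppL c x y : pp (c *: x + y) = c *: pp x + pp y.
Proof.
rewrite /ppart thD thZ scalerA mulrC -scalerA -scalerDr; congr (_ *: _).
by rewrite scalerBr opprD addrACA.
Qed.

Lemma b_fix_anti u w : th u = - u -> th w = w -> b u w = 0.
Proof.
move=> Hu Hw; have : b u w = - b u w by rewrite -{1}bth Hu Hw bNl.
move/eqP; rewrite -subr_eq0 opprK -mulr2n -mulr_natl mulf_eq0 (negbTE two_neq0) /=.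
by move/eqP.
Qed.


Definition adj (h x : L) := br h x.
Fact adj_lin h : linear (adj h).
Proof. by move=> c u v; rewrite /adj brDr brZr. Qed.
HB.instance Definition _ h := GRing.isLinear.Build K L L *:%R (adj h) (adj_lin h).
Definition adjf h : 'End(L) := linfun (adj h).
Lemma adjfE h x : adjf h x = br h x.
Proof. by rewrite /adjf lfunE. Qed.

Variable (a : {vspace L}).
Hypothesis Hca : even_cartan_subspace gr br th a.

Lemma a_g0 h : h \in a -> h \in gr false.
Proof. by case: Hca => H _ _ _; apply: (subvP H). Qed.
Lemma a_th h : h \in a -> th h = - h.
Proof. by case: Hca => _ H _ _; apply: H. Qed.
Lemma a_comm h u : h \in a -> u \in a -> br h u = 0.
Proof. by case: Hca => _ _ H _ Hh /H [_ Hu]; apply: Hu. Qed.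
Lemma a_in x : th x = - x -> (forall h, h \in a -> br h x = 0) -> x \in a.
Proof. by case: Hca => _ _ H _ H1 H2; apply/H. Qed.
Lemma a_ss h : h \in a -> exists s : seq L,
        [/\ all (fun v => v \in gr false) s,
            forall v, v \in s -> exists c : K, br h v = c *: v &
            (gr false <= <<s>>)%VS].
Proof. by case: Hca => _ _ _ H; apply: H. Qed.

Lemma F0 h : h \in a ->
  (gr false <= (gr false :&: lker (adjf h)) + adjf h @: gr false)%VS.
Proof.
move=> Ha; case: (a_ss Ha) => s [Hall Hev Hsub].
apply: subv_trans Hsub _; apply/span_subvP => e es.
have e0 : e \in gr false by move/allP: Hall; apply.
case: (Hev e es) => c hc.
have [c0|cn0] := eqVneq c 0.
  apply: (subvP (addvSl _ _)).
  by rewrite memv_cap e0 memv_ker adjfE hc c0 scale0r eqxx.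
apply: (subvP (addvSr _ _)).
have -> : e = adjf h (c^-1 *: e) by rewrite adjfE brZr hc scalerA mulVf // scale1r.
by apply: memv_img; rewrite memvZ.
Qed.

Lemma img_g0 h : h \in a -> (adjf h @: gr false <= gr false)%VS.
Proof.
move=> Ha; apply/subvP => _ /memv_imgP [u Hu ->]; rewrite adjfE.
exact: (grbr (a_g0 Ha) Hu).
Qed.

Lemma F1 h x : h \in a -> x \in gr false -> br h (br h x) = 0 -> br h x = 0.
Proof.
move=> Ha Hx Hhh.
set T := adjf h.
have sub := F0 Ha. have Isub := img_g0 Ha.
have dimE := limg_ker_dim T (gr false).
have dsc := dimv_sum_cap (gr false :&: lker T) (T @: gr false).
have le1 := dimvS sub.
have cap0 : \dim ((gr false :&: lker T) :&: (T @: gr false)) = 0%N.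
  move: le1; rewrite -dimE -dsc -{2}[\dim (_ + _)%VS]addn0 leq_add2l leqn0.
  by move/eqP.
have Hy : br h x \in ((gr false :&: lker T) :&: (T @: gr false))%VS.
  rewrite memv_cap; apply/andP; split.
    rewrite memv_cap memv_ker adjfE Hhh eqxx andbT.
    exact: (grbr (a_g0 Ha) Hx).
  by rewrite -adjfE memv_img.
move/eqP: cap0; rewrite dimv_eq0 => /eqP E.
by move: Hy; rewrite E memv0 => /eqP.
Qed.

Lemma DEC h v : h \in a -> v \in gr false -> exists v0 x,
  [/\ v0 \in gr false, br h v0 = 0, x \in gr false & v = v0 + br h x].
Proof.
move=> Ha Hv; have := subvP (F0 Ha) v Hv.
move/memv_addP => [v0 H0 [v1 H1 ->]].
move: H0; rewrite memv_cap memv_ker adjfE => /andP [H0 /eqP H0'].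
case/memv_imgP: H1 => x Hx ->.
by exists v0, x; rewrite adjfE; split.
Qed.

Lemma IND u hs : u \in a -> all (fun h => h \in a) hs ->
  forall v, v \in gr false -> exists z,
    [/\ z \in gr false, (forall h, h \in hs -> br h z = 0) & b u v = b u z].
Proof.
move=> Hu; elim: hs => [|h hs IH] /=.
  by move=> _ v Hv; exists v; split => // h; rewrite in_nil.
case/andP => Ha Hall v Hv.
case: (IH Hall v Hv) => z' [Hz' Hc Hb].
case: (DEC Ha Hz') => v0 [x [H0 H0' Hx Hdec]].
exists v0; split => //.
  move=> h'; rewrite inE => /orP [/eqP -> // | Hh'].
  have Ha' : h' \in a by move/allP: Hall; apply.
  have Hzero := Hc h' Hh'.
  rewrite Hdec brDr in Hzero.
  have E : br h' v0 = br h (- br h' x).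
    have J : br h' (br h x) = br h (br h' x).
      by rewrite (jac_even _ (a_g0 Ha') (a_g0 Ha)) (a_comm Ha' Ha) br0l add0r.
    by rewrite brNr -J; apply/eqP; rewrite -addr_eq0 Hzero.
  rewrite E; apply: (F1 Ha).
    by rewrite memvN; exact: (grbr (a_g0 Ha') Hx).
  rewrite -E (jac_even _ (a_g0 Ha) (a_g0 Ha')) (a_comm Ha Ha') br0l add0r.
  by rewrite H0' br0r.
by rewrite Hb Hdec bDr -binv (a_comm Hu Ha) b0l addr0.
Qed.

Lemma NDA u : u \in a -> (forall h, h \in a -> b u h = 0) -> u = 0.
Proof.
move=> Hu Hb; apply: bnd => v.
case: (grD v) => v0 H0 [v1 H1 ->].
rewrite bDr (b_eo (a_g0 Hu) H1) addr0.
have Hall : all (fun h => h \in a) (vbasis a).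
  by apply/allP => h; apply: vbasis_mem.
case: (IND Hu Hall H0) => z [Hz Hc ->].
have Hcz : forall h, h \in a -> br h z = 0.
  move=> h Ha; rewrite (coord_vbasis Ha) brsuml big1 // => i _.
  by rewrite brZl Hc ?scaler0 // mem_nth // size_tuple.
rewrite -(kpp z) bDr (b_fix_anti (a_th Hu) (th_kp z)) add0r.
apply: Hb; apply: a_in; first exact: th_pp.
move=> h Ha; rewrite /ppart brZr brBr Hcz //.
have <- : th (br (th h) z) = br h (th z) by rewrite thbr thK.
by rewrite (a_th Ha) brNl Hcz // oppr0 th0 subrr scaler0.
Qed.

Lemma self_opp (c : K) : c = - c -> c = 0.
Proof.
move/eqP; rewrite -subr_eq0 opprK -mulr2n -mulr_natl mulf_eq0 (negbTE two_neq0) /=.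
by move/eqP.
Qed.

Lemma half_double (c : K) : 2^-1 * (c + c) = c.
Proof.
by rewrite -mulr2n -(mulr_natl c 2) mulrA mulVf ?two_neq0 // mul1r.
Qed.

Lemma beta_anti v w : v \in gr true -> w \in gr true -> b v (th w) = - b w (th v).
Proof.
move=> Hv Hw; rewrite (b_odd Hv (thgr Hw)) -[in RHS](thK w) bth //.
Qed.

Variables (lam : L -> K) (Alam : L) (q : nat) (x xt : 'I_q -> L).
Hypothesis Hroot : is_root gr br a true lam.
Hypothesis Hno2 : ~ is_root gr br a false (fun h => 2 * lam h).
Hypothesis HA : Alam \in a.
Hypothesis HAb : forall h, h \in a -> b Alam h = lam h.
Hypothesis Hspan : forall v, weight_vec gr br a true lam v <->
             v \in <<[seq x i | i <- enum 'I_q] ++ [seq xt i | i <- enum 'I_q]>>%VS.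
Hypothesis Hxx : forall i j, b (x i) (th (x j)) = 0.
Hypothesis Hxtxt : forall i j, b (xt i) (th (xt j)) = 0.
Hypothesis Hxxt : forall i j, b (x i) (th (xt j)) = 2 * (i == j)%:R.

Definition W v := weight_vec gr br a true lam v.

Lemma W_gr v : W v -> v \in gr true.
Proof. by case. Qed.
Lemma W_act v h : W v -> h \in a -> br h v = lam h *: v.
Proof. by case=> _ H; apply: H. Qed.
Lemma WD v w : W v -> W w -> W (v + w).
Proof. by move=> /Hspan Hv /Hspan Hw; apply/Hspan; rewrite memvD. Qed.
Lemma WZ c v : W v -> W (c *: v).
Proof. by move=> /Hspan Hv; apply/Hspan; rewrite memvZ. Qed.
Lemma WN v : W v -> W (- v).
Proof. by move=> /Hspan Hv; apply/Hspan; rewrite memvN. Qed.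
Lemma WB v w : W v -> W w -> W (v - w).
Proof. by move=> Hv Hw; apply: WD => //; apply: WN. Qed.
Lemma W_x i : W (x i).
Proof. by apply/Hspan; apply: memv_span; rewrite mem_cat map_f ?mem_enum. Qed.
Lemma W_xt i : W (xt i).
Proof. by apply/Hspan; apply: memv_span; rewrite mem_cat map_f ?mem_enum ?orbT. Qed.

Lemma lam0 : exists h0, h0 \in a /\ lam h0 != 0.
Proof. by case: Hroot => [[h0 [H1 H2]] _]; exists h0. Qed.

Lemma W_th v h : W v -> h \in a -> br h (th v) = - (lam h *: th v).
Proof.
move=> Hv Ha; have <- : th (br (th h) v) = br h (th v) by rewrite thbr thK.
by rewrite (a_th Ha) brNl (W_act Hv Ha) thN thZ.
Qed.
Lemma W_kp v h : W v -> h \in a -> br h (kp v) = lam h *: pp v.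
Proof.
move=> Hv Ha; rewrite /kpart /ppart brZr brDr (W_act Hv Ha) (W_th Hv Ha).
rewrite [in RHS]scalerA [in RHS]mulrC -[in RHS]scalerA scalerBr.
by rewrite !scalerBr.
Qed.
Lemma W_pp v h : W v -> h \in a -> br h (pp v) = lam h *: kp v.
Proof.
move=> Hv Ha; rewrite /kpart /ppart brZr brBr (W_act Hv Ha) (W_th Hv Ha).
rewrite [in RHS]scalerA [in RHS]mulrC -[in RHS]scalerA. 
by rewrite opprK -[in LHS]scalerDr.
Qed.

Lemma W_br v w : W v -> W w -> br v w = 0.
Proof.
move=> Hv Hw; case: (eqVneq (br v w) 0) => // nz; exfalso; apply: Hno2; split.
  case: lam0 => h0 [H0 Hl0]; exists h0; split => //.
  by rewrite mulf_neq0 // two_neq0.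
exists (br v w); split => //; split.
  exact: (grbr (W_gr Hv) (W_gr Hw)).
move=> h Ha; rewrite (jac_even _ (a_g0 Ha) (W_gr Hv)) (W_act Hv Ha) (W_act Hw Ha).
by rewrite brZl brZr -scalerDl -mulr2n mulr_natl.
Qed.

Lemma W_b v w : W v -> W w -> b v w = 0.
Proof.
move=> Hv Hw; case: lam0 => h0 [H0 Hl0].
have E : lam h0 * b v w = - (lam h0 * b v w).
  rewrite -{1}bZl -(W_act Hv H0).
  have -> : br h0 v = - br v h0 by rewrite (skew_even (a_g0 H0) (W_gr Hv)) opprK.
  by rewrite bNl binv (W_act Hw H0) bZr.
by move/self_opp/eqP: E; rewrite mulf_eq0 (negbTE Hl0) /= => /eqP.
Qed.

Lemma span_coef (f : 'I_q -> L) (r : seq 'I_q) v : uniq r ->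
  v \in <<[seq f i | i <- r]>>%VS -> exists c : 'I_q -> K, v = \sum_(i <- r) c i *: f i.
Proof.
elim: r v => [|i r IH] v /=.
  by move=> _; rewrite span_nil memv0 => /eqP ->; exists (fun _ => 0); rewrite big_nil.
case/andP => ni ur; rewrite span_cons => /memv_addP [v1 /vlineP [al ->] [v2 H2 ->]].
case: (IH v2 ur H2) => c Hc.
exists (fun j => if j == i then al else c j).
rewrite big_cons eqxx Hc; congr (_ + _); apply: eq_big_seq => j jr.
have : j != i by apply: contraNneq ni => <-.
by move/negbTE ->.
Qed.

Lemma W_coef v : W v -> exists c d,
  v = \sum_i c i *: x i + \sum_i d i *: xt i.
Proof.
move/Hspan; rewrite span_cat => /memv_addP [v1 H1 [v2 H2 ->]].
case: (span_coef (enum_uniq _) H1) => c ->.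
case: (span_coef (enum_uniq _) H2) => d ->.
by exists c, d; rewrite !big_enum.
Qed.

Lemma sum_delta (F : 'I_q -> K) m : \sum_i F i * (2 * (i == m)%:R) = F m * 2.
Proof.
rewrite (bigD1 m) //= eqxx mulr1 big1 ?addr0 // => i /negbTE ->.
by rewrite mulr0 mulr0.
Qed.

Lemma Hxtx i j : b (xt i) (th (x j)) = - (2 * (i == j)%:R).
Proof. rewrite beta_anti; [by rewrite Hxxt eq_sym | exact: W_gr (W_xt i) | exact: W_gr (W_x j)]. Qed.

Lemma ZT D : W D -> (forall i, b D (th (x i)) = 0) ->
  (forall i, b D (th (xt i)) = 0) -> D = 0.
Proof.
move=> HD H1 H2; case: (W_coef HD) => c [d E].
have Hc : forall m, c m = 0.
  move=> m; have := H2 m; rewrite E bDl !bsuml.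
  under eq_bigr do rewrite bZl Hxxt.
  under [X in _ + X]eq_bigr do rewrite bZl Hxtxt mulr0.
  rewrite big1_eq addr0 sum_delta => /eqP; rewrite mulf_eq0 (negbTE two_neq0) orbF.
  by move/eqP.
have Hd : forall m, d m = 0.
  move=> m; have := H1 m; rewrite E bDl !bsuml.
  under eq_bigr do rewrite bZl Hxx mulr0.
  under [X in _ + X]eq_bigr do rewrite bZl Hxtx mulrN.
  rewrite big1_eq add0r sumrN sum_delta => /eqP; rewrite oppr_eq0 mulf_eq0 (negbTE two_neq0) orbF.
  by move/eqP.
by rewrite E !big1 ?addr0 // => i _; rewrite ?Hc ?Hd scale0r.
Qed.

Lemma ZT' D : W D -> (forall v, W v -> b D (th v) = 0) -> D = 0.
Proof. by move=> HD H; apply: ZT => // i; apply: H; first [apply: W_x | apply: W_xt]. Qed.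

Lemma KKexp u v : br (kp u) (kp v) =
  (2^-1 * 2^-1) *: ((br u v + br u (th v)) + (br (th u) v + br (th u) (th v))).
Proof. by rewrite /kpart brZl brZr brDl !brDr scalerA. Qed.
Lemma PPexp u v : br (pp u) (pp v) =
  (2^-1 * 2^-1) *: ((br u v - br u (th v)) - (br (th u) v - br (th u) (th v))).
Proof. by rewrite /ppart brZl brZr brBl !brBr scalerA. Qed.
Lemma KPexp u v : br (kp u) (pp v) =
  (2^-1 * 2^-1) *: ((br u v - br u (th v)) + (br (th u) v - br (th u) (th v))).
Proof. by rewrite /kpart /ppart brZl brZr brDl !brBr scalerA. Qed.

Lemma Z2 v v' : W v -> W v' -> br (th v) (th v') = 0.
Proof. by move=> Hv Hv'; rewrite -thbr (W_br Hv Hv') th0. Qed.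
Lemma Eth v v' : br (th v) v' = th (br v (th v')).
Proof. by rewrite thbr thK. Qed.

Lemma BKP v v' : W v -> W v' ->
  br (kp v) (pp v') = - (2^-1 * b v (th v')) *: Alam.
Proof.
move=> Hv Hv'; set w := br v (th v').
have Hw : forall h, h \in a -> br h w = 0.
  move=> h Ha; rewrite /w (jac_even _ (a_g0 Ha) (W_gr Hv)) (W_act Hv Ha).
  by rewrite (W_th Hv' Ha) brZl brNr brZr addrN.
have Htw : forall h, h \in a -> br h (th w) = 0.
  move=> h Ha; have <- : th (br (th h) w) = br h (th w) by rewrite thbr thK.
  by rewrite (a_th Ha) brNl Hw // oppr0 th0.
have Hpa : pp w \in a.
  apply: a_in; first exact: th_pp.
  by move=> h Ha; rewrite /ppart brZr brBr Hw // Htw // subrr scaler0.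
have Hua : pp w - b v (th v') *: Alam \in a by rewrite memvB // memvZ.
have Hu : pp w = b v (th v') *: Alam.
  apply/eqP; rewrite -subr_eq0; apply/eqP; apply: NDA => // h Ha.
  rewrite bBl (bZl _ Alam) HAb // /ppart bZl bBl.
  have -> : b (th w) h = - b w h by rewrite -[h in LHS]thK bth (a_th Ha) bNr.
  rewrite opprK half_double.
  rewrite /w binv.
  have -> : br (th v') h = lam h *: th v'.
    by rewrite (skew_even (a_g0 Ha) (thgr (W_gr Hv'))) (W_th Hv' Ha) opprK.
  by rewrite bZr mulrC subrr.
rewrite KPexp (W_br Hv Hv') (Z2 Hv Hv') -/w Eth -/w. 
rewrite scaleNr -[in RHS]scalerA -Hu /ppart -[in LHS]scalerA. 
by rewrite sub0r subr0 -!scalerN opprB addrC.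
Qed.

Lemma BKK v v' : W v -> W v' -> br (kp v) (kp v') = - br (pp v) (pp v').
Proof.
move=> Hv Hv'; rewrite KKexp PPexp (W_br Hv Hv') (Z2 Hv Hv') -scalerN.
by congr (_ *: _); rewrite !add0r !addr0 ?sub0r ?subr0 opprD !opprK.
Qed.

Lemma bKK v1 v : W v1 -> W v -> b (kp v1) (kp v) = 2^-1 * b v1 (th v).
Proof.
move=> H1 Hv; rewrite /kpart bZl bZr bDl !bDr (W_b H1 Hv) bth (W_b H1 Hv).
rewrite -[v in b (th v1) v]thK bth. 
by rewrite add0r addr0 half_double.
Qed.

Lemma kp_br m v : br m (th v) = th (br m v) -> br m (kp v) = kp (br m v).
Proof. by move=> E; rewrite /kpart brZr brDr E. Qed.
Lemma pp_br m v : br m (th v) = th (br m v) -> br m (pp v) = pp (br m v).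
Proof. by move=> E; rewrite /ppart brZr brBr E. Qed.

Lemma alg (t ll B2 B1' B2' B1 X : K) : t != 0 ->
  t * X = - (- (t * B2) * (ll * (t * B1')) - - (t * B2') * - (ll * (t * B1))) ->
  X = ll * t * (B2 * B1' + B1 * B2').
Proof.
move=> tn E; apply: (mulfI tn); rewrite E mulrNN mulNr opprB opprK addrC.
rewrite !mulrDr; congr (_ + _).
  by rewrite !mulrA [t * B2 * ll]mulrAC [t * ll * B2 * t]mulrAC.
by rewrite !mulrA [t * B2' * ll]mulrAC [t * ll * B2' * t]mulrAC [LHS]mulrAC.
Qed.

Lemma kp0 : kp 0 = 0.
Proof. by rewrite /kpart th0 addr0 scaler0. Qed.
Lemma pp0 : pp 0 = 0.
Proof. by rewrite /ppart th0 subr0 scaler0. Qed.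
Lemma kpL2 c e1 e2 u1 u2 : kp (c *: (e1 *: u1 + e2 *: u2)) = (c * e1) *: kp u1 + (c * e2) *: kp u2.
Proof. by rewrite scalerDr (scalerA c e1) (scalerA c e2) kpL -[(c * e2) *: u2]addr0 kpL kp0 addr0. Qed.
Lemma ppL2 c e1 e2 u1 u2 : pp (c *: (e1 *: u1 + e2 *: u2)) = (c * e1) *: pp u1 + (c * e2) *: pp u2.
Proof. by rewrite scalerDr (scalerA c e1) (scalerA c e2) ppL -[(c * e2) *: u2]addr0 ppL pp0 addr0. Qed.
Lemma sc2 (ll d : K) : ll * 2^-1 * (2 * d) = ll * d.
Proof. by rewrite -mulrA (mulrA _ 2) mulVf ?two_neq0 // mul1r. Qed.
Lemma sc2N (ll d : K) : ll * 2^-1 * (- (2 * d)) = - (ll * d).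
Proof. by rewrite mulrN sc2. Qed.

Lemma sc_lin (ll d1 d2 : K) (u1 u2 : L) :
  (ll * d1) *: u1 + (ll * d2) *: u2 = ll *: (d1 *: u1 + d2 *: u2).
Proof. by rewrite scalerDr !scalerA. Qed.
Lemma sc_linN (ll d1 d2 : K) (u1 u2 : L) :
  - (ll * d1) *: u1 + - (ll * d2) *: u2 = - (ll *: (d1 *: u1 + d2 *: u2)).
Proof. by rewrite !scaleNr -opprD sc_lin. Qed.
Lemma sc1 (ll d : K) (u : L) : - (ll * d) *: u = - (ll *: (d *: u)).
Proof. by rewrite scaleNr scalerA. Qed.
Lemma sc1' (ll d : K) (u : L) : (ll * d) *: u = ll *: (d *: u).
Proof. by rewrite scalerA. Qed.

Local Opaque kpart ppart.
Section M.
Variables v1 v2 : L.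
Hypotheses (H1 : W v1) (H2 : W v2).
Let M := br (kp v1) (kp v2).

Lemma M_g0 : M \in gr false.
Proof. exact: (grbr (kpgr (W_gr H1)) (kpgr (W_gr H2))). Qed.
Lemma M_th : th M = M.
Proof. by rewrite /M thbr !th_kp. Qed.
Lemma M_comm h : h \in a -> br h M = 0.
Proof.
move=> Ha; rewrite /M (jac_even _ (a_g0 Ha) (kpgr (W_gr H1))) (W_kp H1 Ha) (W_kp H2 Ha).
rewrite (brZl (lam h)) (brZr (lam h)) (skew_odd (ppgr (W_gr H1)) (kpgr (W_gr H2))) (BKP H2 H1) (BKP H1 H2).
rewrite (beta_anti (W_gr H2) (W_gr H1)).
by rewrite -scalerDr -scalerDl mulrN opprK addrN scale0r scaler0.
Qed.
Lemma M_act v : W v -> W (br M v).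
Proof.
move=> Hv; split; first exact: (grbr M_g0 (W_gr Hv)).
move=> h Ha; rewrite (jac_even _ (a_g0 Ha) M_g0) (M_comm Ha) br0l add0r.
by rewrite (W_act Hv Ha) brZr.
Qed.
Lemma M_thv v : br M (th v) = th (br M v).
Proof. by rewrite thbr M_th. Qed.
Lemma M_kp v : br M (kp v) = kp (br M v).
Proof. exact/kp_br/M_thv. Qed.
Lemma M_pp v : br M (pp v) = pp (br M v).
Proof. exact/pp_br/M_thv. Qed.

Lemma MASTER v : W v ->
  br M v = (b Alam Alam * 2^-1) *: (b v2 (th v) *: v1 + b v1 (th v) *: v2).
Proof.
move=> Hv; apply/eqP; rewrite -subr_eq0; apply/eqP; apply: ZT'.
  apply: WB; first exact: M_act.
  by apply: WZ; apply: WD; apply: WZ.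
move=> v' Hv'; rewrite bBl; apply/eqP; rewrite subr_eq0; apply/eqP.
rewrite binv; set w := br v (th v').
have E1 : b M (br (kp v) (kp v')) = 2^-1 * b M w.
  rewrite KKexp (W_br Hv Hv') (Z2 Hv Hv') Eth -/w bZr !bDr b0r add0r addr0.
  by rewrite -{2}M_th bth -mulrA half_double.
have E2 : b M (br (kp v) (kp v')) = - b (kp v1) (br (kp v2) (br (pp v) (pp v'))).
  by rewrite (BKK Hv Hv') bNr /M binv.
have llE : lam Alam = b Alam Alam by rewrite HAb.
have E3 : br (kp v2) (br (pp v) (pp v')) =
   (- (2^-1 * b v2 (th v))) *: (b Alam Alam *: kp v')
   - (- (2^-1 * b v2 (th v'))) *: (- (b Alam Alam *: kp v)).
  rewrite (jac_odd _ (kpgr (W_gr H2)) (ppgr (W_gr Hv))) (BKP H2 Hv) (BKP H2 Hv').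
  rewrite (brZl _ Alam) (brZr _ Alam) (W_pp Hv' HA) (skew_even (a_g0 HA) (ppgr (W_gr Hv))).
  by rewrite (W_pp Hv HA) llE.
rewrite E3 bBr (bZr (- (2^-1 * b v2 (th v)))) (bZr (b Alam Alam) (kp v')) (bZr (- (2^-1 * b v2 (th v')))) bNr (bZr (b Alam Alam) (kp v)) (bKK H1 Hv) (bKK H1 Hv') E1 in E2.
rewrite (bZl (b Alam Alam / 2)) bDl (bZl (b v2 (th v))) (bZl (b v1 (th v))).
by apply: (alg _ E2); rewrite invr_neq0 // two_neq0.
Qed.
End M.

Lemma final (i j k : 'I_q) :
  let y i := kpart th (x i) in
  let z i := ppart th (x i) in
  let yt i := kpart th (xt i) in
  let zt i := ppart th (xt i) in
  let ll := b Alam Alam in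
  (br (y i) (z j) = 0 /\ br (yt i) (zt j) = 0 /\
   br (yt i) (z j) = (i == j)%:R *: Alam /\ br (y i) (zt j) = - ((i == j)%:R *: Alam)) /\
  (br (y i) (y j) = - br (z i) (z j) /\ br (yt i) (yt j) = - br (zt i) (zt j) /\
   br (y i) (yt j) = - br (z i) (zt j)) /\
  (br (br (y i) (y j)) (y k) = 0 /\ br (br (yt i) (yt j)) (yt k) = 0 /\
   br (br (y i) (y j)) (yt k) = ll *: ((j == k)%:R *: y i + (i == k)%:R *: y j) /\
   br (br (yt i) (yt j)) (y k) = - (ll *: ((j == k)%:R *: yt i + (i == k)%:R *: yt j)) /\
   br (br (y i) (yt j)) (y k) = - (ll *: ((j == k)%:R *: y i)) /\
   br (br (y i) (yt j)) (yt k) = ll *: ((i == k)%:R *: yt j)) /\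
  (br (br (y i) (y j)) (z k) = 0 /\ br (br (yt i) (yt j)) (zt k) = 0 /\
   br (br (y i) (y j)) (zt k) = ll *: ((j == k)%:R *: z i + (i == k)%:R *: z j) /\
   br (br (yt i) (yt j)) (z k) = - (ll *: ((j == k)%:R *: zt i + (i == k)%:R *: zt j)) /\
   br (br (y i) (yt j)) (z k) = - (ll *: ((j == k)%:R *: z i)) /\
   br (br (y i) (yt j)) (zt k) = ll *: ((i == k)%:R *: zt j)).
Proof.
move=> y z yt zt ll; rewrite /y /z /yt /zt /ll.
have Wx := W_x; have Wxt := W_xt.
split; [|split; [|split]].
- rewrite !BKP // Hxx Hxtxt Hxtx Hxxt !mulr0 oppr0 scale0r.
  rewrite mulrN opprK mulrA mulVf ?two_neq0 // mul1r scaleNr; split => //.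
- by rewrite !BKK.
- rewrite !M_kp // !MASTER // !Hxx !Hxtxt !Hxxt !Hxtx !kpL2 !sc2 !sc2N !mulr0.
  rewrite !scale0r ?addr0 ?add0r; do !split;
    first [exact: sc_lin | exact: sc_linN | exact: sc1 | exact: sc1' | done].
- rewrite !M_pp // !MASTER // !Hxx !Hxtxt !Hxxt !Hxtx !ppL2 !sc2 !sc2N !mulr0.
  rewrite !scale0r ?addr0 ?add0r; do !split;
    first [exact: sc_lin | exact: sc_linN | exact: sc1 | exact: sc1' | done].
Qed.

End Main.

Theorem mainTheorem8 (K : closedFieldType) (L : vectType K)
  (gr : bool -> {vspace L}) (br : L -> L -> L) (th : L -> L) (b : L -> L -> K)
  (a : {vspace L}) (lam : L -> K) (Alam : L) (q : nat) (x xt : 'I_q -> L) :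
  [pchar K] =i pred0 ->
  reductive_symmetric_superpair gr br th b ->
  even_cartan_subspace gr br th a ->
  is_root gr br a true lam ->
  ~ is_root gr br a false (fun h => 2 * lam h) ->
  Alam \in a -> (forall h, h \in a -> b Alam h = lam h) ->
  free ([seq x i | i <- enum 'I_q] ++ [seq xt i | i <- enum 'I_q]) ->
  (forall v, weight_vec gr br a true lam v <->
             v \in <<[seq x i | i <- enum 'I_q] ++ [seq xt i | i <- enum 'I_q]>>%VS) ->
  (forall i j, b (x i) (th (x j)) = 0) ->
  (forall i j, b (xt i) (th (xt j)) = 0) ->
  (forall i j, b (x i) (th (xt j)) = 2 * (i == j)%:R) ->
  let y i := kpart th (x i) in
  let z i := ppart th (x i) in
  let yt i := kpart th (xt i) in
  let zt i := ppart th (xt i) in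
  let ll := b Alam Alam in
  forall i j k : 'I_q,
  (* (i) *)
  (br (y i) (z j) = 0 /\ br (yt i) (zt j) = 0 /\
   br (yt i) (z j) = (i == j)%:R *: Alam /\ br (y i) (zt j) = - ((i == j)%:R *: Alam)) /\
  (* (ii) *)
  (br (y i) (y j) = - br (z i) (z j) /\ br (yt i) (yt j) = - br (zt i) (zt j) /\
   br (y i) (yt j) = - br (z i) (zt j)) /\
  (* (iii) *)
  (br (br (y i) (y j)) (y k) = 0 /\ br (br (yt i) (yt j)) (yt k) = 0 /\
   br (br (y i) (y j)) (yt k) = ll *: ((j == k)%:R *: y i + (i == k)%:R *: y j) /\
   br (br (yt i) (yt j)) (y k) = - (ll *: ((j == k)%:R *: yt i + (i == k)%:R *: yt j)) /\
   br (br (y i) (yt j)) (y k) = - (ll *: ((j == k)%:R *: y i)) /\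
   br (br (y i) (yt j)) (yt k) = ll *: ((i == k)%:R *: yt j)) /\
  (* (iv) *)
  (br (br (y i) (y j)) (z k) = 0 /\ br (br (yt i) (yt j)) (zt k) = 0 /\
   br (br (y i) (y j)) (zt k) = ll *: ((j == k)%:R *: z i + (i == k)%:R *: z j) /\
   br (br (yt i) (yt j)) (z k) = - (ll *: ((j == k)%:R *: zt i + (i == k)%:R *: zt j)) /\
   br (br (y i) (yt j)) (z k) = - (ll *: ((j == k)%:R *: z i)) /\
   br (br (y i) (yt j)) (zt k) = ll *: ((i == k)%:R *: zt j)).
Proof.
move=> c0 Hsp Hca Hr Hn HA HAb _ Hspan Hxx Hxtxt Hxxt y z yt zt ll i j k.
exact: (final c0 Hsp Hca Hr Hn HA HAb Hspan Hxx Hxtxt Hxxt i j k).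
Qed.
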